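(* Let $A$ be a finite set and let $X \subset A^{\mathbb Z}$ be a strongly irreducible subshift. Then $X$ is surjunctive and its automorphism group $\mathrm{Aut}(X)$ is residually finite. Moreover, $X$ admits a shift-invariant Borel probability measure with full support.
   Context: $A^{\mathbb Z}$ carries the product topology of discrete topologies and the shift action $(gx)(h)=x(h-g)$. A subshift is a closed shift-invariant subset. $X$ is strongly irreducible if there is a finite $\Delta\subset\mathbb Z$ such that for all finite $\Omega_1,\Omega_2\subset\mathbb Z$ with $(\Omega_1-\Delta)\cap\Omega_2=\varnothing$ and all $x_1,x_2\in X$ there is $x\in X$ with $x|_{\Omega_1}=x_1|_{\Omega_1}$ and $x|_{\Omega_2}=x_2|_{\Omega_2}$. A cellular automaton on $X$ is a continuous shift-equivariant map $X\to X$; $X$ is surjunctive if every injective cellular automaton $X\to X$ is surjective; $\mathrm{Aut}(X)$ is the group of bijective cellular automata $X\to X$ under composition. A group is residually finite if the intersection of its finite-index subgroups is trivial. *)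

(* Defs.v *)
From HB Require Import structures.
From mathcomp Require Import all_boot all_order all_algebra.
From mathcomp Require Import all_classical all_reals all_analysis.
From mathcomp Require Import Rstruct Rstruct_topology.

Set Implicit Arguments.
Unset Strict Implicit.
Unset Printing Implicit Defensive.

Import Order.TTheory GRing.Theory Num.Theory.
Local Open Scope classical_set_scope.
Local Open Scope ring_scope.

Definition cfg (A : finType) : Type :=
  prod_topology (fun _ : int => discrete_topology A).

Definition shift (A : finType) (g : int) (x : cfg A) : cfg A :=
  fun h => x (h - g).

Definition shift_invariant (A : finType) (X : set (cfg A)) : Prop :=
  forall (g : int) (x : cfg A), X x -> X (shift g x).

Definition subshift (A : finType) (X : set (cfg A)) : Prop :=
  closed X /\ shift_invariant X.

Definition strongly_irreducible (A : finType) (X : set (cfg A)) : Prop :=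
  exists Delta : set int, finite_set Delta /\
    forall Omega1 Omega2 : set int, finite_set Omega1 -> finite_set Omega2 ->
      [set w - d | w in Omega1 & d in Delta] `&` Omega2 = set0 ->
      forall x1 x2 : cfg A, X x1 -> X x2 ->
        exists x : cfg A, X x /\
          (forall h, Omega1 h -> x h = x1 h) /\ (forall h, Omega2 h -> x h = x2 h).

Definition shiftX (A : finType) (X : set (cfg A)) (hX : shift_invariant X)
    (g : int) (x : set_type X) : set_type X :=
  exist _ (shift g (sval x)) (mem_set (hX g _ (set_mem (svalP x)))).

Definition cellular_automaton (A : finType) (X : set (cfg A))
    (hX : shift_invariant X) (tau : set_type X -> set_type X) : Prop :=
  continuous tau /\ forall (g : int) (x : set_type X),
    tau (shiftX hX g x) = shiftX hX g (tau x).

Definition surjunctive (A : finType) (X : set (cfg A)) (hX : shift_invariant X) : Prop :=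
  forall tau : set_type X -> set_type X,
    cellular_automaton hX tau -> injective tau -> forall y : set_type X, exists x, tau x = y.

Definition Aut (A : finType) (X : set (cfg A)) (hX : shift_invariant X)
    : set (set_type X -> set_type X) :=
  [set tau | cellular_automaton hX tau /\ bijective tau].

(* Group-theoretic notions for a group G, given as a subset of a type T with
   multiplication [mul] and identity [one]. *)
Definition is_subgroup (T : Type) (G : set T) (mul : T -> T -> T) (one : T)
    (H : set T) : Prop :=
  [/\ H `<=` G, H one,
      (forall a b, H a -> H b -> H (mul a b)) &
      (forall a, H a -> exists2 b, H b & mul b a = one)].

Definition finite_index (T : Type) (G : set T) (mul : T -> T -> T) (H : set T) : Prop :=
  exists L : set T, [/\ finite_set L, L `<=` G &
    forall a, G a -> exists2 l, L l & exists2 h, H h & a = mul l h].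

Definition residually_finite (T : Type) (G : set T) (mul : T -> T -> T) (one : T) : Prop :=
  forall a, G a ->
    (forall H, is_subgroup G mul one H -> finite_index G mul H -> H a) -> a = one.

(* The space X with its subspace topology, pointed at a given x0 in X
   (the pointing is a technical requirement of the measure-theory library). *)
Definition ptX (A : finType) (X : set (cfg A)) (x0 : cfg A) (hx0 : x0 \in X)
  : Type := set_type X.
Section PointedX.
Variables (A : finType) (X : set (cfg A)) (x0 : cfg A) (hx0 : x0 \in X).
HB.instance Definition _ := Topological.copy (ptX hx0) (set_type X).
HB.instance Definition _ := isPointed.Build (ptX hx0) (exist _ x0 hx0 : set_type X).
End PointedX.
Definition borelX (A : finType) (X : set (cfg A)) (x0 : cfg A) (hx0 : x0 \in X)
  : measurableType _ := g_sigma_algebraType (@open (ptX hx0)).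


Definition Rreal : realType := Rdefinitions.R.

(* Main.v *)
Require Import Defs.
From HB Require Import structures.
From mathcomp Require Import all_boot all_order all_algebra.
From mathcomp Require Import all_classical all_reals all_analysis.
From mathcomp Require Import Rstruct Rstruct_topology.
From mathcomp Require Import zify ring.
Set Implicit Arguments.
Unset Strict Implicit.
Unset Printing Implicit Defensive.
Import Order.TTheory GRing.Theory Num.Theory.
Local Open Scope classical_set_scope.
Local Open Scope ring_scope.

Section Topo.
Context (A : finType).

Definition agree (x y : cfg A) (n : nat) := forall i : int, (`|i| <= n)%N -> x i = y i.

Lemma nbhs_coord (x : cfg A) (i : int) : nbhs x [set y : cfg A | y i = x i].
Proof.
have := @proj_continuous int (fun _ : int => discrete_topology A) i x.
move=> /(_ [set x i]).
apply.
by rewrite /= nbhs_principalE; apply/principal_filterP.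
Qed.

Lemma nbhs_agree (x : cfg A) n : nbhs x [set y : cfg A | agree y x n].
Proof.
elim: n => [|n IH].
  apply: filterS (nbhs_coord x 0) => y /= hy i; rewrite leqn0 absz_eq0 => /eqP ->//.
apply: filterS (filterI IH (filterI (nbhs_coord x n.+1%:Z) (nbhs_coord x (- n.+1%:Z)))).
move=> y [h1 [h2 h3]] i; rewrite leq_eqVlt ltnS => /orP[|]; last exact: h1.
case: i => [k|k] /eqP.
  by rewrite absz_nat => ->.
by rewrite NegzE abszN absz_nat => ->.
Qed.

Lemma agree_nbhs (x : cfg A) (U : set (cfg A)) :
  nbhs x U -> exists n, [set y : cfg A | agree y x n] `<=` U.
Proof.
pose F := filter_from [set: nat] (fun n => [set y : cfg A | agree y x n]).
have FF : ProperFilter F.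
  apply: filter_from_proper; last by move=> n _; exists x.
  apply: filter_from_filter; first by exists 0%N.
  move=> i j _ _; exists (maxn i j) => // y hy; split => k hk; apply: hy;
    by rewrite (leq_trans hk) // ?leq_maxl ?leq_maxr.
suff Fx : F --> x.
  by move=> /Fx [n _ hn]; exists n.
apply/cvg_sup => i.
apply/cvg_image => //.
  rewrite eqEsubset; split => // a _; exists (fun _ => a) => //.
move=> V /=; rewrite nbhs_principalE => /principal_filterP Vx.
exists [set y : cfg A | V (y i)].
  exists `|i|%N => // y hy; by rewrite /= hy.
rewrite eqEsubset; split => a.
  by case=> y /= + <-.
move=> Va; exists (fun j => if j == i then a else x j) => /=.
  by rewrite eqxx.
by rewrite eqxx.
Qed.


Lemma cfg_compact : compact [set: cfg A].
Proof.
have := @tychonoff int (fun _ : int => discrete_topology A) (fun _ => setT)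
  (fun _ => @finite_compact (discrete_topology A) setT (@finite_finset A setT)).
by congr (compact _); rewrite eqEsubset.
Qed.

Context (X : set (cfg A)) (hcl : closed X).

Lemma X_compact : compact X.
Proof. exact: (subclosed_compact hcl cfg_compact). Qed.

Lemma nbhs_agreeX (x : set_type X) n :
  nbhs x [set y : set_type X | agree (sval y) (sval x) n].
Proof.
have := @initial_continuous (set_type X) (cfg A) set_val x _ (nbhs_agree (sval x) n).
by [].
Qed.

Lemma agree_nbhsX (x : set_type X) (U : set (set_type X)) :
  nbhs x U -> exists n, forall y : set_type X, agree (sval y) (sval x) n -> U y.
Proof.
rewrite nbhsE => -[W [oW Wx] WU].
case: oW => V oV VW.
have : nbhs (sval x) V.
  by apply: open_nbhs_nbhs; split => //; rewrite -VW in Wx.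
case/agree_nbhs => n hn; exists n => y hy; apply: WU; rewrite -VW; exact: hn.
Qed.

Lemma cluster_seq (w : nat -> set_type X) :
  exists z : set_type X, forall n N, exists2 m, (N <= m)%N & agree (sval (w m)) (sval z) n.
Proof.
pose F := (fun m => sval (w m)) @ \oo.
have FF : ProperFilter F by exact: fmap_proper_filter.
have FX : F X by exists 0%N => // m _; exact: (set_mem (svalP (w m))).
have [c [Xc clc]] := X_compact FF FX.
exists (exist _ c (mem_set Xc)) => n N.
have hF : F [set sval (w m) | m in [set m | (N <= m)%N]].
  rewrite /F nbhs_simpl. exists N => // m /= hm; exists m => //.
have [y [[m /= hm <-] hag]] := clc _ _ hF (nbhs_agree c n).
by exists m.
Qed.

End Topo.


Section Comb.
Context (A : finType) (X : set (cfg A)) (hX : shift_invariant X) (d0 : A).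

Definition occ (x : cfg A) (k : int) (u : seq A) :=
  forall i : nat, (i < size u)%N -> x (k + i%:Z) = nth d0 u i.
Definition legal (u : seq A) := exists x, X x /\ occ x 0 u.

Lemma legal_occ x k u : X x -> occ x k u -> legal u.
Proof.
move=> Xx ho; exists (Defs.shift (- k) x); split; first exact: hX.
by move=> i hi; rewrite /Defs.shift add0r opprK addrC; exact: ho.
Qed.

Lemma legal_catl u v : legal (u ++ v) -> legal u.
Proof.
case=> x [Xx ho]; exists x; split=> // i hi.
by rewrite ho ?size_cat ?nth_cat ?hi //; lia.
Qed.

Lemma legal_catr u v : legal (u ++ v) -> legal v.
Proof.
case=> x [Xx ho]; apply: (@legal_occ _ (size u)%:Z _ Xx) => i hi.
have := ho (size u + i)%N; rewrite size_cat nth_cat.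
have -> : (size u + i < size u)%N = false by lia.
rewrite addKn add0r PoszD => -> //; lia.
Qed.

Lemma fin_interval (a : int) (n : nat) : finite_set [set h : int | a <= h < a + n%:Z].
Proof.
apply: (sub_finite_set _ (finite_image (fun k : nat => a + k%:Z) (finite_II n))).
move=> h /= /andP[h1 h2]; exists `|h - a|%N.
  rewrite /= /`I_n /=; lia.
rewrite /=; lia.
Qed.

Lemma fin_bound (D : set int) : finite_set D -> exists M : nat, forall d, D d -> (`|d| <= M)%N.
Proof.
case/finite_fsetP => B ->; exists (\max_(d <- finmap.enum_fset B) `|d|%N) => d hd.
by apply: (@leq_bigmax_seq _ _ xpredT (fun d : int => `|d|%N)).
Qed.

Lemma SI_gap : strongly_irreducible X -> exists2 N : nat, (0 < N)%N &
  forall (x1 x2 : cfg A) (n1 n2 : nat), X x1 -> X x2 -> exists x, X x /\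
    (forall i : nat, (i < n1)%N -> x i%:Z = x1 i%:Z) /\
    (forall i : nat, (i < n2)%N -> x (n1%:Z + N%:Z + i%:Z) = x2 (n1%:Z + N%:Z + i%:Z)).
Proof.
case=> Delta [fD HD]; have [M hM] := fin_bound fD.
exists M.+1 => // x1 x2 n1 n2 X1 X2.
have f1 := fin_interval 0 n1.
have f2 := fin_interval (n1%:Z + M.+1%:Z) n2.
have [] := HD _ _ f1 f2 _ x1 x2 X1 X2.
  apply/seteqP; split => // h [[w /= /andP[w1 w2] [d /hM hd <-]] /= /andP[h1 h2]].
  exfalso; lia.
move=> x [Xx [e1 e2]]; exists x; split => //; split.
  move=> i hi; apply: e1 => /=; lia.
move=> i hi; apply: e2 => /=; lia.
Qed.


Definition gap_prop (N : nat) := forall (x1 x2 : cfg A) (n1 n2 : nat), X x1 -> X x2 -> exists x, X x /\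
    (forall i : nat, (i < n1)%N -> x i%:Z = x1 i%:Z) /\
    (forall i : nat, (i < n2)%N -> x (n1%:Z + N%:Z + i%:Z) = x2 (n1%:Z + N%:Z + i%:Z)).

Lemma legal_glue N (HN : gap_prop N) u v : legal u -> legal v ->
  exists a, size a = N /\ legal (u ++ a ++ v).
Proof.
case=> x1 [X1 o1]; case=> x2 [X2 o2].
have [x [Xx [e1 e2]]] := HN x1 (Defs.shift ((size u)%:Z + N%:Z) x2) (size u) (size v) X1 (hX _ X2).
exists (mkseq (fun i => x ((size u)%:Z + i%:Z)) N); split; first by rewrite size_mkseq.
exists x; split => // i hi; rewrite !nth_cat size_mkseq.
case: ltnP => h1.
  by rewrite -o1 // add0r e1.
case: ltnP => h2.
  rewrite nth_mkseq; last by lia.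
  rewrite add0r; congr x; lia.
have hj : (i - size u - N < size v)%N by move: hi; rewrite !size_cat size_mkseq; lia.
rewrite -o2 // add0r.
have -> : (i%:Z = (size u)%:Z + N%:Z + (i - size u - N)%N%:Z) by lia.
rewrite e2 // /Defs.shift; congr x2; lia.
Qed.

Lemma nth_flatten_nseq (c : seq A) n j : (j < n * size c)%N ->
  nth d0 (flatten (nseq n c)) j = nth d0 c (j %% size c).
Proof.
elim: n j => [|n IH] j; first by rewrite mul0n.
move=> hj /=; rewrite nth_cat; case: ltnP => h.
  by rewrite modn_small.
rewrite IH; last by move: hj; rewrite mulSn; lia.
by rewrite -{2}(subnK h) modnDr.
Qed.

Definition perx (c : seq A) : cfg A := fun h => nth d0 c `|(h %% (size c)%:Z)%Z|%N.

Lemma perx_period c : Defs.shift (size c)%:Z (perx c) = perx c.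
Proof.
apply/funext => h; rewrite /Defs.shift /perx.
have -> : (h - (size c)%:Z = (-1) * (size c)%:Z + h) by ring.
by rewrite modzMDl.
Qed.

Lemma periodic_closure (hcl : closed X) (c : seq A) : (0 < size c)%N ->
  (forall n, legal (flatten (nseq n c))) -> X (perx c).
Proof.
move=> cpos hleg; apply: hcl => B nB.
have [m hm] := agree_nbhs nB.
have [x [Xx ox]] := hleg (2 * m + 3)%N.
set L := size c in cpos ox *.
pose k : int := ((m + 1) * L)%N%:Z.
exists (Defs.shift (- k) x); split; first exact: hX.
apply: hm => h hh; rewrite /Defs.shift opprK.
have hpos : (0 <= h + k) by rewrite /k; nia.
pose j := absz (h + k).
have hj : (h + k = j%:Z) by rewrite /j gez0_abs.
have hjl : (j < size (flatten (nseq (2 * m + 3) c)))%N.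
  rewrite size_flatten /shape map_nseq sumn_nseq -/L.
  rewrite /k in hj; nia.
have := ox j hjl; rewrite add0r -hj => ->.
rewrite nth_flatten_nseq; last by move: hjl; rewrite size_flatten /shape map_nseq sumn_nseq; nia.
rewrite /perx -/L; congr nth.
have -> : (h %% L%:Z = (h + k) %% L%:Z)%Z.
  by rewrite /k PoszM addrC modzMDl.
by rewrite hj modz_nat.
Qed.


Section Sync.
Variables (N : nat) (HN : gap_prop N) (hN0 : (0 < N)%N).

Definition K (u v : seq A) : {set N.-tuple A} :=
  [set a : N.-tuple A | `[< legal (u ++ (a : seq A) ++ v) >]].

Lemma K_nonempty u v : legal u -> legal v -> exists a, a \in K u v.
Proof.
move=> lu lv; have [a [ha la]] := legal_glue HN lu lv.
exists (@Tuple N A a (introT eqP ha)); rewrite inE; exact: asboolT.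
Qed.

Lemma flatten_nseqS (c : seq A) n : flatten (nseq n.+1 c) = flatten (nseq n c) ++ c.
Proof.
elim: n => [|n IH]; first by rewrite /= cats0.
change (c ++ flatten (nseq n.+1 c) = flatten (nseq n.+1 c) ++ c).
by rewrite {1}IH catA.
Qed.

Lemma sync w : legal w -> exists c : seq A, [/\ (0 < size c)%N,
  (forall n, legal (flatten (nseq n c))) &
  exists s : nat, (s + size w <= size c)%N /\
    forall i, (i < size w)%N -> nth d0 c (s + i) = nth d0 w i].
Proof.
move=> lw.
pose P n := `[< exists s t, [/\ legal (s ++ w), legal (w ++ t) &
   #|K (s ++ w) (w ++ t)| = n] >].
have exP : exists n, P n.
  exists #|K w w|; apply: asboolT; exists [::], [::]; rewrite cats0; split => //.
case: (ex_minnP exP) => n0 /asboolW [s0 [t0 [lu lv cn0]]] minn0.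
set u := s0 ++ w in lu cn0; set v := w ++ t0 in lv cn0.
have key : forall s' t', legal (s' ++ u) -> legal (v ++ t') ->
    forall a, a \in K u v -> a \in K (s' ++ u) (v ++ t').
  move=> s' t' l1 l2 a aK.
  have sub : K (s' ++ u) (v ++ t') \subset K u v.
    apply/fintype.subsetP => b; rewrite !inE => lb.
    rewrite -!catA in lb; have lb2 := legal_catr lb.
    have lb3 : legal ((u ++ (b : seq A) ++ v) ++ t') by rewrite -!catA.
    exact: legal_catl lb3.
  have cle : (n0 <= #|K (s' ++ u) (v ++ t')|)%N.
    apply: minn0; apply: asboolT; exists (s' ++ s0), (t0 ++ t'); split.
    - by rewrite -catA.
    - by rewrite catA.
    - by rewrite -(catA s') (catA w).
  have : K (s' ++ u) (v ++ t') == K u v by rewrite eqEcard sub cn0.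
  by move/eqP ->.
have [a aK] := K_nonempty lu lv.
have lB : legal (u ++ (a : seq A) ++ v) by move: aK; rewrite !inE.
set B := u ++ (a : seq A) ++ v in lB.
have [b [hb lBB]] := legal_glue HN lB lB.
pose c := u ++ (a : seq A) ++ v ++ b.
have hQ : forall n, legal (flatten (nseq n c) ++ B).
  elim => [|n IH]; first by rewrite /=.
  have l1 : legal (flatten (nseq n c) ++ u).
    by move: IH; rewrite /B catA => /legal_catl.
  have l2 : legal (v ++ (b ++ B)).
    have e : B ++ (b : seq A) ++ B = (u ++ (a : seq A)) ++ (v ++ ((b : seq A) ++ B)).
      by rewrite /B -!catA.
    by move: lBB; rewrite e => /legal_catr.
  have := key _ _ l1 l2 a aK; rewrite !inE.
  rewrite flatten_nseqS /c /B; congr legal; rewrite -!catA //.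
exists c; split.
- by rewrite /c !size_cat size_tuple hb; lia.
- by move=> n; have := hQ n; apply: legal_catl.
- exists (size s0); split.
    by rewrite /c /u !size_cat; lia.
  move=> i hi; rewrite /c /u -!catA nth_cat.
  have -> : (size s0 + i < size s0)%N = false by lia.
  rewrite addKn nth_cat hi //.
Qed.

End Sync.

End Comb.


Section Dense.
Context (A : finType) (X : set (cfg A)) (hX : shift_invariant X) (d0 : A).
Lemma dense_periodic (hcl : closed X) N (HN : gap_prop X N) (hN0 : (0 < N)%N)
  (x : cfg A) : X x -> forall m : nat, exists p, [/\ X p,
    (exists k : nat, (0 < k)%N /\ Defs.shift k%:Z p = p) & agree p x m].
Proof.
move=> Xx m.
pose w := mkseq (fun i : nat => x (i%:Z - m%:Z)) (2 * m + 1).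
have lw : legal X d0 w.
  apply: (@legal_occ _ X hX d0 x (- m%:Z) w Xx) => i hi.
  rewrite size_mkseq in hi; rewrite nth_mkseq //.
  by rewrite addrC.
have [c [cpos hc [s [hs hcs]]]] := sync hX HN hN0 lw.
have Xy := periodic_closure hX hcl cpos hc.
set y := perx d0 c in Xy.
have e1 : forall j, y (j - (size c)%:Z) = y j.
  by move=> j; exact: (congr1 (fun f => f j) (perx_period d0 c)).
exists (Defs.shift (- (s%:Z + m%:Z)) y); split.
- exact: hX.
- exists (size c); split => //.
  apply/funext => h; rewrite /Defs.shift -[RHS]e1.
  congr y; lia.
- move=> h hh; rewrite /Defs.shift opprK.
  pose i := absz (h + m%:Z).
  have hi : (h + m%:Z = i%:Z) by rewrite /i gez0_abs //; lia.
  have hiw : (i < size w)%N by rewrite size_mkseq; lia.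
  have -> : h + (s%:Z + m%:Z) = (s + i)%N%:Z by rewrite PoszD -hi addrCA.
  rewrite /y /perx modz_nat absz_nat modn_small; last by apply: (leq_trans _ hs); rewrite ltn_add2l.
  rewrite hcs // nth_mkseq; last by move: hiw; rewrite size_mkseq.
  congr x; lia.
Qed.
End Dense.


Lemma per_mod (A : finType) (z : cfg A) (k : nat) : (0 < k)%N ->
  Defs.shift k%:Z z = z -> forall h, z h = z (h %% k%:Z)%Z.
Proof.
move=> kpos hz.
have e : forall h, z (h - k%:Z) = z h by move=> h; exact: (congr1 (fun f => f h) hz).
have e2 : forall (n : nat) h, z (h - n%:Z * k%:Z) = z h.
  elim => [|n IH] h; first by rewrite mul0r subr0.
  have -> : h - n.+1%:Z * k%:Z = (h - n%:Z * k%:Z) - k%:Z by rewrite -addn1 PoszD; ring.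
  by rewrite e IH.
move=> h; have hq := divz_eq h k%:Z.
have -> : modz h k%:Z = h - divz h k%:Z * k%:Z by rewrite {2}hq addrC addKr.
case: (divz h k%:Z) => n.
  by rewrite e2.
rewrite NegzE mulNr opprK.
by rewrite -{1}(e2 n.+1 (h + n.+1%:Z * k%:Z)) addrK.
Qed.

Section Main.
Context (A : finType) (X : set (cfg A)) (hcl : closed X) (hX : shift_invariant X).
Local Notation T := (set_type X).

Definition FixS (k : nat) : set T := [set z : T | Defs.shift k%:Z (sval z) = sval z].

Definition tk (k : nat) (z : T) : k.-tuple A :=
  mktuple (fun i : 'I_k => sval z (nat_of_ord i)%:Z).

Lemma FixS_inj k : (0 < k)%N -> forall z1 z2, FixS k z1 -> FixS k z2 ->
  tk k z1 = tk k z2 -> z1 = z2.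
Proof.
move=> kpos z1 z2 h1 h2 e.
apply: val_inj; apply/funext => h /=.
rewrite (per_mod kpos h1) (per_mod kpos h2).
have hm : (0 <= modz h k%:Z)%R by apply: modz_ge0; rewrite eqz_nat -lt0n.
have hlt : (modz h k%:Z < k%:Z)%R by rewrite ltz_pmod.
have hr : modz h k%:Z = (absz (modz h k%:Z))%:Z by lia.
have hik : (absz (modz h k%:Z) < k)%N by lia.
have e2 := congr1 (fun t : k.-tuple A => tnth t (Ordinal hik)) e.
rewrite /tk !tnth_mktuple /= in e2.
by rewrite hr.
Qed.

Lemma finite_FixS k : (0 < k)%N -> finite_set (FixS k).
Proof.
move=> kpos.
pose f (z : T) : option (k.-tuple A) :=
  if pselect (FixS k z) is left _ then Some (tk k z) else None.
apply: (@sub_finite_set _ _ (f @^-1` [set: option (k.-tuple A)] `&` FixS k)).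
  by move=> z hz; split.
apply: (@sub_finite_set _ _ (f @^-1` (Some @` setT))).
  by move=> z [_ hz]; rewrite /f /=; case: pselect => // _; exists (tk k z).
apply: finite_preimage; last exact: finite_finset.
move=> z1 z2; rewrite !inE /f /=.
case: pselect => h1; case: pselect => h2 //=.
- by move=> _ _ /Some_inj e; exact: (FixS_inj kpos h1 h2 e).
- by move=> _ [t _].
Qed.

Lemma CA_Fix tau k : cellular_automaton hX tau -> forall z, FixS k z -> FixS k (tau z).
Proof.
case=> _ eqv z hz.
have E : shiftX hX k%:Z z = z by apply: val_inj.
have h := eqv k%:Z z; rewrite E in h.
by rewrite /FixS /= [in RHS]h.
Qed.

Lemma inj_fin_onto (f : T -> T) (S : set T) : finite_set S ->
  (forall z, S z -> S (f z)) -> injective f -> forall p, S p -> exists q, f q = p.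
Proof.
move=> fS fSS finj p Sp.
pose s : seq T := finmap.enum_fset (fset_set S).
have memS : forall x, (x \in s) = `[< S x >].
  by move=> x; rewrite /s in_fset_set // inE.
have us : uniq s by exact: finmap.fset_uniq.
have um : uniq (map f s) by rewrite map_inj_uniq.
have sub : {subset map f s <= s}.
  move=> x /mapP [y ys ->]; rewrite memS; apply: asboolT; apply: fSS.
  by move: ys; rewrite memS => /asboolW.
have sz : (size s <= size (map f s))%N by rewrite size_map.
have [_ e] := uniq_min_size um sub sz.
have : p \in map f s by rewrite e memS; exact: asboolT.
by case/mapP => q _ ->; exists q.
Qed.

Lemma limit_pt (tau : T -> T) (ctau : continuous tau) (w : nat -> T) (y : T) :
  (forall m, agree (sval (tau (w m))) (sval y) m) ->
  exists z, tau z = y /\ (forall n N, exists2 j, (N <= j)%N & agree (sval (w j)) (sval z) n).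
Proof.
move=> hw; have [z hz] := cluster_seq hcl w.
exists z; split => //.
apply: val_inj; apply/funext => h /=.
pose n0 := absz h.
have nb2 : nbhs z (tau @^-1` [set v : T | agree (sval v) (sval (tau z)) n0]).
  exact: (ctau z _ (nbhs_agreeX (tau z) n0)).
have [m hm] := agree_nbhsX nb2.
have [j hj ag] := hz m n0.
have := hm (w j) ag => /= ag2.
rewrite -(ag2 h (leqnn _)); apply: hw; rewrite /n0; exact: hj.
Qed.

Lemma inv_continuous (tau sigma : T -> T) : continuous tau ->
  cancel tau sigma -> cancel sigma tau -> continuous sigma.
Proof.
move=> ct c1 c2 y U nU.
have [n hn] := agree_nbhsX nU.
suff [m hm] : exists m, forall z : T, agree (sval z) (sval y) m ->
    agree (sval (sigma z)) (sval (sigma y)) n.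
  by apply: filterS (nbhs_agreeX y m) => z hz; exact: hn (hm z hz).
apply: contrapT => hneg.
have : forall m, exists z : T, agree (sval z) (sval y) m /\
    ~ agree (sval (sigma z)) (sval (sigma y)) n.
  move=> m; apply: contrapT => h2; apply: hneg; exists m => z hz.
  apply: contrapT => h3; apply: h2; exists z; split => //.
case/choice => zs hzs.
have [z [tz hclu]] := @limit_pt tau ct (fun m => sigma (zs m)) y
  (fun m => ltac:(rewrite c2; exact: (hzs m).1)).
have zy : z = sigma y by rewrite -tz c1.
have [j _ hj] := hclu n 0%N.
by apply: (hzs j).2; rewrite -zy.
Qed.

Lemma CA_comp (s t : T -> T) : cellular_automaton hX s -> cellular_automaton hX t ->
  cellular_automaton hX (s \o t).
Proof.
case=> cs es [ct et]; split.
  by move=> x; apply: continuous_comp; [exact: ct | exact: cs].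
by move=> g x /=; rewrite et es.
Qed.

Lemma CA_id : cellular_automaton hX idfun.
Proof. by split => // x; exact: cvg_id. Qed.

Lemma CA_inv (tau sigma : T -> T) : cellular_automaton hX tau ->
  cancel tau sigma -> cancel sigma tau -> cellular_automaton hX sigma.
Proof.
case=> ct et c1 c2; split; first exact: inv_continuous ct c1 c2.
move=> g x; apply: (can_inj c1); by rewrite c2 et c2.
Qed.

Lemma shift_shift (a b : int) (z : cfg A) :
  Defs.shift a (Defs.shift b z) = Defs.shift (a + b) z.
Proof. by apply/funext => h; rewrite /Defs.shift; congr z; ring. Qed.

Lemma FixS_mul k j z : FixS k z -> FixS (j * k) z.
Proof.
move=> hz; elim: j => [|j IH]; first by rewrite /FixS /= mul0n; apply/funext => h; rewrite /Defs.shift; congr (sval z); lia.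
rewrite /FixS /= mulSn PoszD -shift_shift.
by rewrite [X in Defs.shift _ X]IH hz.
Qed.

Lemma FixS_shift k g z : FixS k z -> FixS k (shiftX hX g z).
Proof.
move=> hz; rewrite /FixS /= shift_shift addrC -shift_shift.
by rewrite [X in Defs.shift _ X]hz.
Qed.

Lemma shiftXK g : cancel (shiftX hX g) (shiftX hX (- g)).
Proof.
move=> z; apply: val_inj => /=; rewrite shift_shift.
by rewrite addNr /Defs.shift; apply/funext => h; rewrite subr0.
Qed.

Section SI.
Hypothesis HSI : strongly_irreducible X.

Lemma densityX (z : T) m : exists p : T, exists k,
  [/\ (0 < k)%N, FixS k p & agree (sval p) (sval z) m].
Proof.
have Xz : X (sval z) by exact: set_mem (svalP z).
have [N hN0 HN] := SI_gap HSI.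
have [p [Xp [k [kpos hk]] ag]] := dense_periodic hX (sval z 0) hcl HN hN0 Xz m.
by exists (exist _ p (mem_set Xp)), k.
Qed.

Lemma surj : surjunctive hX.
Proof.
move=> tau [ctau eqv] inj y.
have : forall m, exists q : T, agree (sval (tau q)) (sval y) m.
  move=> m; have [p [k [kpos Fp ag]]] := densityX y m.
  have [q tq] := inj_fin_onto (finite_FixS kpos) (CA_Fix (conj ctau eqv)) inj Fp.
  by exists q; rewrite tq.
case/choice => w hw.
by have [z [tz _]] := limit_pt ctau hw; exists z.
Qed.


Lemma Aut_inv s : Aut hX s -> exists2 g, Aut hX g & (cancel s g /\ cancel g s).
Proof.
case=> ca [g c1 c2]; exists g; last by split.
split; [exact: CA_inv ca c1 c2 | exact: (Bijective c2 c1)].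
Qed.

Lemma Aut_comp s t : Aut hX s -> Aut hX t -> Aut hX (s \o t).
Proof.
case=> cs bs [ct bt]; split; first exact: CA_comp.
exact: bij_comp.
Qed.

Definition Hk k : set (T -> T) := [set s | Aut hX s /\ forall q, FixS k q -> s q = q].

Lemma Hk_subgroup k : is_subgroup (Aut hX) (fun s t => s \o t) idfun (Hk k).
Proof.
split.
- by move=> s [].
- split => //; split; first exact: CA_id.
  exact: (@Bijective _ _ idfun idfun (fun _ => erefl) (fun _ => erefl)).
- move=> a b [Aa fa] [Ab fb]; split; first exact: Aut_comp.
  by move=> q hq /=; rewrite fb // fa.
- move=> a [Aa fa]; have [g Ag [c1 c2]] := Aut_inv Aa.
  exists g; last by apply/funext => z /=; rewrite c1.
  split => // q hq; rewrite -{1}(fa q hq); exact: c1.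
Qed.

Definition enumF k : seq T := finmap.enum_fset (fset_set (FixS k)).

Definition code k (s : T -> T) : (size (enumF k)).-tuple (k.-tuple A) :=
  map_tuple (fun q => tk k (s q)) (in_tuple (enumF k)).

Lemma perm_shift k g : (0 < k)%N -> perm_eq (map (shiftX hX g) (enumF k)) (enumF k).
Proof.
move=> kpos.
have memF : forall z, (z \in enumF k) = `[< FixS k z >].
  by move=> z; rewrite /enumF in_fset_set ?inE //; exact: finite_FixS.
apply: uniq_perm.
- by rewrite map_inj_uniq ?finmap.fset_uniq //; exact: can_inj (shiftXK g).
- exact: finmap.fset_uniq.
move=> z; apply/idP/idP.
  case/mapP => y; rewrite !memF => /asboolW hy ->; apply: asboolT; exact: FixS_shift.
rewrite memF => /asboolW hz.
have <- : shiftX hX g (shiftX hX (- g) z) = z.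
  by have := shiftXK (- g) z; rewrite opprK.
apply: map_f; rewrite memF; apply: asboolT; exact: FixS_shift.
Qed.

Lemma code_eq k s s' : (0 < k)%N -> cellular_automaton hX s -> cellular_automaton hX s' ->
  code k s = code k s' -> forall q, FixS k q -> s q = s' q.
Proof.
move=> kpos cs cs' e q hq.
have e2 := congr1 val e; rewrite /= in e2.
have hin : q \in enumF k.
  rewrite /enumF in_fset_set; last exact: finite_FixS kpos.
  by rewrite inE.
have := (iffRL (eq_in_map _ _ _) e2) q hin => /= htk.
apply: (FixS_inj kpos _ _ htk); [exact: (CA_Fix cs hq) | exact: (CA_Fix cs' hq)].
Qed.

Lemma Hk_findex k : (0 < k)%N -> finite_index (Aut hX) (fun s t => s \o t) (Hk k).
Proof.
move=> kpos.
pose R := [set t | exists s', Aut hX s' /\ code k s' = t].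
have : forall t, exists s, R t -> Aut hX s /\ code k s = t.
  move=> t; case: (pselect (R t)) => [[s' hs']|nR]; first by exists s'.
  by exists idfun.
case/choice => rep hrep.
exists (rep @` R); split.
- exact: finite_image finite_finset.
- by move=> _ [t ht <-]; exact: (hrep t ht).1.
- move=> a Aa.
  have Rc : R (code k a) by exists a.
  have [Al cl] := hrep _ Rc.
  exists (rep (code k a)); first by exists (code k a).
  have [g Ag [c1 c2]] := Aut_inv Al.
  exists (g \o a); last by apply/funext => z /=; rewrite c2.
  split; first exact: Aut_comp.
  move=> q hq /=.
  rewrite -(code_eq kpos Al.1 Aa.1 cl hq); exact: c1.
Qed.

Lemma RF : residually_finite (Aut hX) (fun s t => s \o t) idfun.
Proof.
move=> a Aa hall; apply/funext => z; apply: contrapT => hne.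
have [h hh] : exists h, sval (a z) h <> sval z h.
  apply: contrapT => hn; apply: hne; apply: val_inj; apply/funext => h.
  by apply: contrapT => hh; apply: hn; exists h.
have ca := Aa.1.1.
have nb : nbhs z (a @^-1` [set v : T | agree (sval v) (sval (a z)) (absz h)]).
  exact: (ca z _ (nbhs_agreeX (a z) (absz h))).
have [m hm] := agree_nbhsX nb.
have [p [k [kpos Fp ag]]] := densityX z (maxn m (absz h)).
have Hka : Hk k a := hall (Hk k) (Hk_subgroup k) (Hk_findex kpos).
have ap : a p = p := Hka.2 p Fp.
have e1 : sval (a p) h = sval (a z) h.
  apply: (hm p) => //; move=> i hi; apply: ag; exact: leq_trans hi (leq_maxl _ _).
have e2 : sval p h = sval z h by apply: ag; exact: leq_maxr.
by apply: hh; rewrite -e1 -e2 ap.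
Qed.

End SI.
End Main.


Section MixMeasure.
Context d (S : measurableType d) (R : realType) (q0 : nat -> seq S) (x : S).

Definition qq n := if q0 n is [::] then [:: x] else q0 n.
Local Notation q := qq.

Lemma qpos n : (0 < size (q n))%N.
Proof. by rewrite /qq; case: (q0 n). Qed.

Definition nu n : {measure set S -> \bar R} :=
  msum (fun i => \d_(nth x (q n) i)) (size (q n)).

Definition wr n : R := (1 / (2 ^ n.+1)%:R) / (size (q n))%:R.

Lemma wr_ge0 n : 0 <= wr n.
Proof. by rewrite /wr divr_ge0 // divr_ge0. Qed.

Definition mixmu := mseries (fun n => mscale (NngNum (wr_ge0 n)) (nu n)) 0.
HB.instance Definition _ := Measure.on mixmu.
Local Open Scope ereal_scope.

Lemma mixmuE B : mixmu B =
  \sum_(0 <= n <oo) ((wr n)%:E * \sum_(i < size (q n)) \d_(nth x (q n) i) B)%E.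
Proof. by []. Qed.

Lemma geo_half : \sum_(0 <= i <oo) ((1 / (2 ^ i.+1)%:R)%:E : \bar R) = 1.
Proof.
apply: cvg_lim => //.
rewrite (_ : (fun n => _) = EFin \o
    (fun n => \sum_(0 <= i < n) (1 / (2 ^ (i + 1))%:R))%R); last first.
  rewrite funeqE => n /=; rewrite (@big_morph _ _ EFin 0 adde)//.
  by under [in RHS]eq_bigr do rewrite addn1.
apply: cvg_comp; last by apply cvg_refl.
have := cvg_geometric_series_half (1 : R) O.
by rewrite expr0 divr1; apply: cvg_trans.
Qed.

Lemma mixmu_inv (f : S -> S) : (forall n, perm_eq (map f (q n)) (q n)) ->
  forall B, mixmu (f @^-1` B) = mixmu B.
Proof.
move=> hp B; rewrite !mixmuE; apply: eq_eseriesr => n _; congr (_ * _).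
transitivity (\sum_(a <- map f (q n)) (\d_a B : \bar R)).
  rewrite big_map (big_nth x) big_mkord; apply: eq_bigr => i _.
  by rewrite !diracE.
by rewrite (perm_big _ (hp n)) (big_nth x) big_mkord.
Qed.


Lemma mixmu_setT : mixmu setT = 1%E.
Proof.
rewrite mixmuE -geo_half; apply: eq_eseriesr => n _.
under eq_bigr do rewrite diracT.
rewrite sumEFin sumr_const card_ord -EFinM /wr; congr EFin.
by rewrite divfK // pnatr_eq0 -lt0n qpos.
Qed.

HB.instance Definition _ := Measure_isProbability.Build _ _ _ mixmu mixmu_setT.

Lemma mixmu_pos (B : set S) n i : (i < size (q n))%N -> B (nth x (q n) i) -> (0 < mixmu B)%E.
Proof.
move=> hi hB.
have t0 : forall k, (0 <= (wr k)%:E * \sum_(j < size (q k)) \d_(nth x (q k) j) B)%E.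
  by move=> k; rewrite mule_ge0 // ?lee_fin ?wr_ge0 // sume_ge0.
apply: (@lt_le_trans _ _ (\sum_(0 <= k < n.+1) ((wr k)%:E * \sum_(j < size (q k)) \d_(nth x (q k) j) B))%E); last first.
  by rewrite mixmuE; apply: nneseries_lim_ge => k _ _; exact: t0.
rewrite big_nat_recr //=.
apply: (@lt_le_trans _ _ ((wr n)%:E * \sum_(j < size (q n)) \d_(nth x (q n) j) B)%E); last first.
  by rewrite leeDr // sume_ge0.
have wpos : (0 < wr n)%R.
  rewrite /wr; apply: divr_gt0; last by rewrite ltr0n qpos.
  by apply: divr_gt0 => //; rewrite ltr0n expn_gt0.
rewrite mule_gt0 ?lte_fin //.
rewrite (bigD1 (Ordinal hi)) //= diracE mem_set //.
apply: (@lt_le_trans _ _ 1%E); first by rewrite lte_fin ltr01.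
by rewrite leeDl // sume_ge0.
Qed.

End MixMeasure.



Theorem corollary1p4 (A : finType) (X : set (cfg A))
    (hcl : closed X) (hX : shift_invariant X) (hne : X !=set0) :
  strongly_irreducible X ->
  [/\ surjunctive hX,
      residually_finite (Aut hX) (fun s t => s \o t) idfun &
      exists (x0 : cfg A) (hx0 : x0 \in X) (mu : probability (borelX hx0) Rreal),
        (forall (g : int) (B : set (borelX hx0)), measurable B ->
           mu (shiftX hX g @^-1` B) = mu B) /\
        (forall U : set (ptX hx0), open U -> U !=set0 -> (0 < mu U)%E)].
Proof.
move=> HSI; split.
- exact: (surj hcl HSI).
- exact: (RF hcl HSI).
case: hne => x0 Xx0.
have hx0 : x0 \in X := mem_set Xx0.
pose z0 : set_type X := exist _ x0 hx0.
have [p0 [k0 [k0pos Fp0 _]]] := densityX hcl hX HSI z0 0.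
pose q0 : nat -> seq (borelX hx0) := fun n => @enumF _ X (n.+1 * k0).
have kpos : forall n, (0 < n.+1 * k0)%N by move=> n; rewrite muln_gt0.
have memq : forall n z, (z \in q0 n) = `[< FixS (n.+1 * k0) z >].
  by move=> n z; rewrite /q0 /enumF in_fset_set ?inE //; exact: finite_FixS.
have qqE : forall n, qq q0 p0 n = q0 n.
  move=> n; rewrite /qq; case E: (q0 n) => //.
  have : p0 \in q0 n by rewrite memq; apply: asboolT; exact: FixS_mul.
  by rewrite E.
exists x0, hx0, (mixmu Rreal q0 p0 : probability (borelX hx0) Rreal); split.
- move=> g B _; apply: mixmu_inv => n; rewrite qqE; exact: perm_shift.
- move=> U oU [u Uu].
  have nU : nbhs (u : set_type X) U by apply: open_nbhs_nbhs; split.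
  have [m hm] := agree_nbhsX nU.
  have [p [k [kpos' Fp ag]]] := densityX hcl hX HSI u m.
  have Up := hm p ag.
  have Fpk : FixS (k.-1.+1 * k0) p by rewrite prednK // mulnC; exact: FixS_mul.
  have pin : p \in q0 k.-1 by rewrite memq; exact: asboolT.
  apply: (@mixmu_pos _ _ _ q0 p0 U k.-1 (index p (q0 k.-1))).
    by rewrite qqE index_mem.
  by rewrite qqE nth_index.
Qed.
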